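(* For a translation-invariant real function $f$ defined on finite simplicial complexes with vertices in $\mathbb{R}^d\times\mathbb{A}$, the following are equivalent: (i) $f$ is weakly stabilizing; (ii) for every increasing sequence of cubes $(W_n)_{n\in\mathbb{N}}$ with $W_n\to\mathbb{R}^d$, the sequence $\Lambda_{(\mathbf{0},V,1,U)}f(\Delta_{W_n})$ converges in probability as $n\to\infty$.
   Context: Model. Fix $d\in\mathbb{N}$, a Borel space $(\mathbb{A},\mathcal{T})$ with a probability measure $\Theta$, an intensity $\gamma>0$ and $\alpha\in\mathbb{N}$. For $j\in\{1,\dots,\alpha\}$ let $\varphi_j:(\mathbb{R}^d\times\mathbb{A})^{j+1}\to[0,1]$ be measurable, symmetric and translation-invariant, i.e. $\varphi_j((x_0+t,a_0),\dots,(x_j+t,a_j))=\varphi_j((x_0,a_0),\dots,(x_j,a_j))$. Let $\mathbb{M}=\prod_{j=1}^{\alpha}[0,1]^{\mathbb{N}^{2j}}$ with the product $\sigma$-field and $\mathbb{Q}$ the product of uniform distributions on $[0,1]$ over all coordinates. Let $\Psi$ be a Poisson process on $\mathbb{R}^d\times\mathbb{A}\times[0,1]\times\mathbb{M}$ with intensity measure $\gamma\lambda_d\otimes\Theta\otimes\mathcal{U}([0,1])\otimes\mathbb{Q}$. For a locally finite counting measure $\psi$ on this space (distinct third coordinates) the complex $T(\psi)$ is built as follows. Fix an enumeration $z_0=\mathbf{0},z_1,\dots$ of $\mathbb{Z}^d$, $Q_k=[0,1)^d+z_k$. A point $(x,a,s,u)$ of $\psi$ with $x\in Q_k$ gets coordinates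 $(k,i)$ if it is the $i$-th smallest point of $\psi$ in $Q_k\times\mathbb{A}\times[0,1]\times\mathbb{M}$ in the order of third coordinates. For points $(x_0,a_0,s_0,u^{(0)}),\dots,(x_j,a_j,s_j,u^{(j)})$ with $s_0<\dots<s_j$, $1\le j\le\alpha$, and $\sigma=\{(x_0,a_0),\dots,(x_j,a_j)\}$, put $u(\sigma):=u^{(j)}_{m_0,l_0,\dots,m_{j-1},l_{j-1}}$ (coordinate in the factor $[0,1]^{\mathbb{N}^{2j}}$), $(m_k,l_k)$ the coordinates of the $k$-th point. Vertices of $T(\psi)$ are the points $(x,a)$ of $\psi$; a set $\sigma$ of $j+1$ vertices, $1\le j\le\alpha$, is a simplex iff $u(\rho)\le\varphi_{|\rho|-1}(\rho)$ for all $\rho\subseteq\sigma$ with $|\rho|\ge2$. Set $\Delta:=T(\Psi)$, $\Delta^{(x,a,t,u)}:=T(\Psi+\delta_{(x,a,t,u)})$. For a complex $K$ and $W\subseteq\mathbb{R}^d$, $K_W$ is the subcomplex of simplices all of whose vertices have first coordinate in $W$. For a real function $f$ on finite simplicial complexes, $\Lambda_{(x,a,t,u)}f(\Delta_W):=f(\Delta^{(x,a,t,u)}_W)-f(\Delta^{(x,a,t,u)}_{W\setminus\{x\}})$. Weak stabilization. Let $V\sim\Theta$ and $U\sim\mathbb{Q}$ be independent of each other and of $\Psi$. Cubes are half-open axis-parallel cubes $\prod_{i=1}^d[c_i,c_i+s)$; $W_n\to\mathbb{R}^d$ means every bounded set is contained in $W_n$ for all large $n$. $f$ is translation-invariant if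 $f(K)=f(K+t)$ for all $t\in\mathbb{R}^d$ and finite complexes $K$ ($K+t$ translates the $\mathbb{R}^d$-components of all vertices). $f$ is weakly stabilizing if it is translation-invariant and there is a real random variable $Z$ with $\Lambda_{(\mathbf{0},V,1,U)}f(\Delta_{W_n})\to Z$ in probability for every sequence of cubes $W_n\to\mathbb{R}^d$. *)

(* Defs.v *)
From HB Require Import structures.
From mathcomp Require Import all_boot all_order all_algebra perm.
From mathcomp Require Import all_classical all_reals all_analysis.
Set Implicit Arguments.
Unset Strict Implicit.
Unset Printing Implicit Defensive.
Import Order.TTheory GRing.Theory Num.Theory.
Local Open Scope classical_set_scope.
Local Open Scope ring_scope.
Local Open Scope card_scope.

Section Model.
Context (R : realType) (d : nat) (A : Type).

(* marks in M = prod_{j=1}^alpha [0,1]^(N^(2j)) : u j [:: m0; l0; ...; m_(j-1); l_(j-1)] *)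
Definition mark := nat -> seq nat -> R.

Record mpoint := Pt { px : 'rV[R]_d; pa : A; ps : R; pu : mark }.

Definition vertex := ('rV[R]_d * A)%type.
Definition vert (p : mpoint) : vertex := (px p, pa p).

Definition enumeration (z : nat -> 'rV[int]_d) := bijective z /\ z 0%N = 0.

Definition cell (z : nat -> 'rV[int]_d) (x : 'rV[R]_d) (k : nat) :=
  forall i : 'I_d, ((z k 0 i)%:~R <= x 0 i) /\ (x 0 i < (z k 0 i)%:~R + 1).

(* a configuration psi (a simple counting measure, as a set of points) *)
Definition bounded_set (B : set 'rV[R]_d) :=
  exists r : R, forall x, B x -> forall i : 'I_d, `|x 0 i| <= r.

Definition good_config (psi : set mpoint) :=
  (forall B, bounded_set B -> finite_set [set p | psi p /\ B (px p)]) /\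
  (forall p q, psi p -> psi q -> ps p = ps q -> p = q) /\
  (forall p, psi p -> 0 <= ps p < 1).

Definition coord (z : nat -> 'rV[int]_d) (psi : set mpoint) (p : mpoint)
    (k i : nat) :=
  psi p /\ cell z (px p) k /\ (1 <= i)%N /\
  [set q | psi q /\ cell z (px q) k /\ ps q < ps p] #= `I_(i.-1).

Definition ordered_enum (rho : set mpoint) (n : nat) (e : 'I_n.+1 -> mpoint) :=
  range e = rho /\ (forall i j : 'I_n.+1, (i < j)%N -> ps (e i) < ps (e j)).

(* u(rho) <= phi_{|rho|-1}(rho), where u(rho) = u^{(n)}_{m0,l0,...} of the
   last mpoint of rho *)
Definition u_le_phi (z : nat -> 'rV[int]_d)
    (phi : forall j : nat, ('I_j.+1 -> vertex) -> R) (psi : set mpoint)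
    (rho : set mpoint) :=
  forall (n : nat) (e : 'I_n.+1 -> mpoint) (c : 'I_n.+1 -> nat * nat),
    ordered_enum rho e ->
    (forall i, coord z psi (e i) (c i).1 (c i).2) ->
    pu (e ord_max) n
       (flatten [seq [:: (c (widen_ord (leqnSn n) i)).1;
                         (c (widen_ord (leqnSn n) i)).2] | i <- enum 'I_n])
    <= phi n (fun i => vert (e i)).

Definition psimplex (alpha : nat) z phi (psi : set mpoint) (S : set mpoint) :=
  S `<=` psi /\
  (exists j, (1 <= j <= alpha)%N /\ S #= `I_(j.+1)) /\
  (forall rho, rho `<=` S -> (exists m, (2 <= m)%N /\ rho #= `I_m) ->
     u_le_phi z phi psi rho).

Definition complex := set (set vertex).

Definition T alpha z phi (psi : set mpoint) : complex :=
  [set tau | (exists p, psi p /\ tau = [set vert p]) \/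
             (exists S, psimplex alpha z phi psi S /\ tau = vert @` S)].

Definition restr (K : complex) (W : set 'rV[R]_d) : complex :=
  [set sigma | K sigma /\ forall v, sigma v -> W v.1].

Definition is_fcomplex (K : complex) :=
  finite_set K /\
  (forall sigma, K sigma -> finite_set sigma /\ sigma !=set0) /\
  (forall sigma tau, K sigma -> tau `<=` sigma -> tau !=set0 -> K tau).

Definition ctrans (K : complex) (t : 'rV[R]_d) : complex :=
  [set (fun v : vertex => (v.1 + t, v.2)) @` sigma | sigma in K].

Definition translation_invariant (f : complex -> R) :=
  forall K t, is_fcomplex K -> f (ctrans K t) = f K.

Definition phi_ok (alpha : nat) (phi : forall j : nat, ('I_j.+1 -> vertex) -> R) :=
  forall j, (1 <= j <= alpha)%N ->
    (forall v, 0 <= phi j v <= 1) /\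
    (forall (s : {perm 'I_j.+1}) v, phi j (fun i => v (s i)) = phi j v) /\
    (forall v t, phi j (fun i => ((v i).1 + t, (v i).2)) = phi j v).

Definition is_cube (W : set 'rV[R]_d) :=
  exists (c : 'rV[R]_d) (s : R), 0 < s /\
    W = [set x | forall i : 'I_d, c 0 i <= x 0 i < c 0 i + s].

Definition tends_to_Rd (W : nat -> set 'rV[R]_d) :=
  forall B, bounded_set B -> exists N, forall n, (N <= n)%N -> B `<=` W n.

Definition increasing_sets (W : nat -> set 'rV[R]_d) :=
  forall n, W n `<=` W n.+1.

End Model.

Section Prob.
Context (R : realType) (dO : measure_display) (O : measurableType dO)
  (P : probability O R).

Definition cvg_in_prob (X : nat -> O -> R) (Z : O -> R) :=
  forall eps : R, 0 < eps ->
    (fun n => P [set w | eps < `|X n w - Z w| ]) @ \oo --> 0%E.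

End Prob.

Section Stab.
Context (R : realType) (d : nat) (A : Type) (alpha : nat)
  (z : nat -> 'rV[int]_d) (phi : forall j : nat, ('I_j.+1 -> vertex R d A) -> R)
  (O : Type) (Psi : O -> set (mpoint R d A)) (V : O -> A) (U : O -> mark R)
  (f : complex R d A -> R).

Definition Delta_add (w : O) : complex R d A :=
  T alpha z phi (Psi w `|` [set Pt 0 (V w) 1 (U w)]).

Definition LambdaX (W : set 'rV[R]_d) (w : O) : R :=
  f (restr (Delta_add w) W) - f (restr (Delta_add w) (W `\ 0)).

End Stab.

Definition weakly_stabilizing (R : realType) (d : nat) (A : Type) alpha z phi
  (dO : measure_display) (O : measurableType dO) (P : probability O R)
  (Psi : O -> set (mpoint R d A)) V U (f : complex R d A -> R) :=
  translation_invariant f /\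
  exists Z : O -> R, measurable_fun [set: O] Z /\
    forall W : nat -> set 'rV[R]_d, (forall n, is_cube (W n)) -> tends_to_Rd W ->
      cvg_in_prob P (fun n => LambdaX alpha z phi Psi V U f (W n)) Z.

(* Main.v *)
Require Import Defs.
From HB Require Import structures.
From mathcomp Require Import all_boot all_order all_algebra perm.
From mathcomp Require Import all_classical all_reals all_analysis.
Import Order.TTheory GRing.Theory Num.Theory.
Local Open Scope classical_set_scope.
Local Open Scope ring_scope.

Definition ev0 {R : realType} (a : nat -> \bar R) :=
  forall del : R, 0 < del -> exists N, forall n, (N <= n)%N -> (a n < del%:E)%E.

Lemma ev0P (R : realType) (a : nat -> \bar R) : (forall n, 0 <= a n)%E ->
  (a @ \oo --> 0%E) <-> ev0 a.
Proof.
move=> a0; split.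
  move/fine_cvgP => [[N _ HN] /cvgrPdist_lt H] del del0.
  have [M _ HM] := H del del0.
  exists (maxn N M) => n Hn.
  have /HM : (M <= n)%N by rewrite (leq_trans (leq_maxr _ _) Hn).
  have /HN : (N <= n)%N by rewrite (leq_trans (leq_maxl _ _) Hn).
  move=> /= fa; rewrite sub0r normrN => h.
  by rewrite -(fineK fa) lte_fin (le_lt_trans (ler_norm _) h).
move=> H; apply/fine_cvgP; split.
  have [N HN] := H 1 ltr01.
  exists N => // n /HN an; rewrite fin_numE; apply/andP; split.
    by rewrite gt_eqF // (lt_le_trans _ (a0 n)) // ltNyr.
  by rewrite lt_eqF // (lt_trans an) // ltry.
apply/cvgrPdist_lt => e e0.
have [N HN] := H e e0.
exists N => // n /HN an /=.
have fa : a n \is a fin_num.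
  rewrite fin_numE; apply/andP; split.
    by rewrite gt_eqF // (lt_le_trans _ (a0 n)) // ltNyr.
  by rewrite lt_eqF // (lt_trans an) // ltry.
rewrite sub0r normrN ger0_norm; last by rewrite fine_ge0.
by rewrite -lte_fin fineK.
Qed.

Section Prob.
Context {R : realType} {dO : measure_display} {O : measurableType dO}
  (P : probability O R).

Definition sP (Y Z : O -> R) (e : R) := P [set w | e < `|Y w - Z w|].

Lemma meas_sP {Y Z : O -> R} e : measurable_fun setT Y -> measurable_fun setT Z ->
  measurable [set w | e < `|Y w - Z w|].
Proof.
move=> mY mZ.
have mh : measurable_fun setT (Num.Def.normr \o (Y \- Z)).
  apply: measurableT_comp; [exact: measurable_realfun.normr_measurable | exact: measurable_realfun.measurable_funB].
have := mh measurableT _ (measurable_itv `]e, +oo[); rewrite setTI.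
suff -> : [set w | e < `|Y w - Z w|] = (Num.Def.normr \o (Y \- Z)) @^-1` [set` `]e, +oo[] by [].
by apply/seteqP; split => w /=; rewrite in_itv /= andbT.
Qed.

Lemma sP_sym Y Z e : sP Y Z e = sP Z Y e.
Proof. by rewrite /sP; congr (P _); apply/seteqP; split => w /=; rewrite distrC. Qed.

Lemma sP_tri Y1 Y2 Y3 e : measurable_fun setT Y1 -> measurable_fun setT Y2 ->
  measurable_fun setT Y3 ->
  (sP Y1 Y3 e <= sP Y1 Y2 (e/2) + sP Y2 Y3 (e/2))%E.
Proof.
move=> m1 m2 m3.
apply: le_trans (measureU2 _ (meas_sP (e/2) m1 m2) (meas_sP (e/2) m2 m3)).
apply: le_measure; rewrite ?inE.
- exact: meas_sP.
- by apply: measurableU; apply: meas_sP.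
move=> w /= h; rewrite /setU /=.
case: (ltP (e/2) `|Y1 w - Y2 w|) => h1; first by left.
case: (ltP (e/2) `|Y2 w - Y3 w|) => h2; first by right.
exfalso; move: h; apply/negP; rewrite -leNgt.
have -> : Y1 w - Y3 w = (Y1 w - Y2 w) + (Y2 w - Y3 w) by rewrite addrA subrK.
apply: (le_trans (ler_normD _ _)).
by rewrite [e](splitr e); apply: lerD.
Qed.

Lemma cipP X Z : cvg_in_prob P X Z <->
  (forall eps : R, 0 < eps -> ev0 (fun n => sP (X n) Z eps)).
Proof.
split => H eps e0; have := H eps e0; rewrite ev0P //; move=> *; exact: measure_ge0.
Qed.

End Prob.

Lemma ev0_sub {R : realType} (a : nat -> \bar R) (h : nat -> nat) :
  ev0 a -> (forall k, (k <= h k)%N) -> ev0 (a \o h).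
Proof.
move=> H hk del d0; have [N HN] := H del d0; exists N => n Nn.
by apply: HN; rewrite (leq_trans Nn).
Qed.
Require Import Defs.
From HB Require Import structures.
From mathcomp Require Import all_boot all_order all_algebra perm.
From mathcomp Require Import all_classical all_reals all_analysis.
Import Order.TTheory GRing.Theory Num.Theory.
Local Open Scope classical_set_scope.
Local Open Scope ring_scope.

Section Geo.
Context {R : realType} {d : nat}.

Definition cR (m : nat) : 'rV[R]_d := const_mx (- (m.+1)%:R).

Definition Ref (m : nat) : set 'rV[R]_d :=
  [set x | forall i : 'I_d, cR m 0 i <= x 0 i < cR m 0 i + (m.+1)%:R *+ 2].

Lemma Ref_cube m : is_cube (Ref m).
Proof. by exists (cR m), ((m.+1)%:R *+ 2); split => //; rewrite pmulrn_lgt0 // ltr0Sn. Qed.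

Lemma RefP m x : Ref m x <-> forall i : 'I_d, - (m.+1)%:R <= x 0 i < (m.+1)%:R.
Proof.
have E : - (m.+1)%:R + (m.+1)%:R *+ 2 = (m.+1)%:R :> R.
  by rewrite mulr2n addrA addNr add0r.
by split => H i; have := H i; rewrite /cR mxE E.
Qed.

Lemma Ref_incr m m' : (m <= m')%N -> Ref m `<=` Ref m'.
Proof.
move=> mm x /RefP H; apply/RefP => i; have /andP[h1 h2] := H i.
have le : (m.+1)%:R <= (m'.+1)%:R :> R by rewrite ler_nat.
apply/andP; split; first by rewrite (le_trans _ h1) // lerN2.
exact: lt_le_trans h2 le.
Qed.

Lemma Ref_tends : tends_to_Rd Ref.
Proof.
move=> B [r Hr]; exists (Num.truncn r) => n Nn x Bx; apply/RefP => i.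
have h := Hr x Bx i.
have lt : r < (n.+1)%:R.
  apply: (lt_le_trans (truncnS_gt r)); by rewrite ler_nat ltnS.
have : `|x 0 i| < (n.+1)%:R by exact: le_lt_trans h lt.
by rewrite ltr_norml => /andP[a b]; rewrite b ltW.
Qed.

Lemma bounded_Ref (B : set 'rV[R]_d) : Defs.bounded_set B -> exists m, B `<=` Ref m.
Proof. move=> bB; have [N HN] := @Ref_tends B bB; exists N; exact: (HN N (leqnn N)). Qed.

Lemma Ref_bounded m : Defs.bounded_set (Ref m).
Proof.
exists (m.+1)%:R => x /RefP H i; have /andP[a b] := H i.
by rewrite ler_norml a ltW.
Qed.

Lemma cube_bounded (W : set 'rV[R]_d) : is_cube W -> Defs.bounded_set W.
Proof.
move=> [c [s [s0 ->]]].
exists (\sum_i `|c 0 i| + s) => x /= H i; have /andP[a b] := H i.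
have ci : `|c 0 i| <= \sum_i `|c 0 i|.
  by rewrite (bigD1 i) //= lerDl sumr_ge0.
have hs : \sum_i `|c 0 i| <= \sum_i `|c 0 i| + s by rewrite lerDl ltW.
rewrite ler_norml; apply/andP; split.
  rewrite (le_trans _ a) // lerNl (le_trans _ hs) // (le_trans _ ci) //.
  by rewrite -normrN ler_norm.
apply: (le_trans (ltW b)); rewrite lerD2r (le_trans _ ci) //; exact: ler_norm.
Qed.

End Geo.
Section Constr.
Context {T : Type} (W Rf : nat -> set T) (g M Nr : nat -> nat).

Fixpoint nk (k : nat) : nat :=
  match k with
  | 0 => g 0
  | k'.+1 => g (maxn (nk k').+1 (Nr (maxn (M (nk k')) k')))
  end.
Definition mk k := maxn (M (nk k)) k.
Definition Cseq j := if odd j then Rf (mk j./2) else W (nk j./2).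

Lemma C_even k : Cseq k.*2 = W (nk k).
Proof. by rewrite /Cseq odd_double doubleK. Qed.
Lemma C_odd k : Cseq k.*2.+1 = Rf (mk k).
Proof. by rewrite /Cseq /= odd_double /= uphalf_double. Qed.

Lemma nk_g k : exists N, nk k = g N.
Proof. by case: k => [|k] /=; eexists. Qed.

Lemma mk_ge k : (k <= mk k)%N.
Proof. exact: leq_maxr. Qed.

Hypothesis Rf_incr : forall m m', (m <= m')%N -> Rf m `<=` Rf m'.
Hypothesis HM : forall n, W n `<=` Rf (M n).
Hypothesis HNr : forall m n, (Nr m <= n)%N -> Rf m `<=` W n.
Hypothesis Hg : forall N, (N <= g N)%N.

Lemma C_step j : Cseq j `<=` Cseq j.+1.
Proof.
move: (odd_double_half j); set k := j./2; case: (odd j) => /= <-; rewrite ?add0n ?add1n.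
  rewrite -doubleS C_even C_odd /=; apply: HNr.
  apply: leq_trans (Hg _); exact: leq_maxr.
rewrite C_even C_odd; apply: subset_trans (HM _) _; apply: Rf_incr; exact: leq_maxl.
Qed.

Lemma C_mono i j : (i <= j)%N -> Cseq i `<=` Cseq j.
Proof.
move=> /subnK <-; elim: (j - i)%N => [|t IH]; first by rewrite add0n.
by apply: subset_trans IH _; rewrite addSn; apply: C_step.
Qed.

End Constr.
Theorem proposition5p1 (R : realType) (d : nat)
  (dA : measure_display) (A : measurableType dA) (alpha : nat)
  (phi : forall j : nat, ('I_j.+1 -> vertex R d A) -> R)
  (Hphi : phi_ok alpha phi)
  (z : nat -> 'rV[int]_d) (Hz : enumeration z)
  (dO : measure_display) (O : measurableType dO) (P : probability O R)
  (Psi : O -> set (mpoint R d A)) (V : O -> A) (U : O -> mark R)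
  (HPsi : forall w, good_config (Psi w))
  (f : complex R d A -> R) (Hf : translation_invariant f)
  (Hmeas : forall W : set 'rV[R]_d, is_cube W ->
     measurable_fun [set: O] (LambdaX alpha z phi Psi V U f W)) :
  weakly_stabilizing alpha z phi P Psi V U f <->
  (forall W : nat -> set 'rV[R]_d, (forall n, is_cube (W n)) ->
     increasing_sets W -> tends_to_Rd W ->
     exists Z : O -> R, measurable_fun [set: O] Z /\
       cvg_in_prob P (fun n => LambdaX alpha z phi Psi V U f (W n)) Z).
Proof.
set X := fun W => LambdaX alpha z phi Psi V U f W.
split.
  move=> [_ [Z [mZ HZ]]] W Wc _ Wt; exists Z; split => //; exact: HZ.
move=> H2.
have [Z0 [mZ0 cZ0]] := H2 Ref (@Ref_cube R d)
  (fun n => @Ref_incr R d _ _ (leqnSn n)) (@Ref_tends R d).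
split => //; exists Z0; split => // W Wc Wt.
apply/cipP => eps e0 del d0.
set a := fun n => sP P (X (W n)) Z0 eps.
case: (pselect (exists N, forall n, (N <= n)%N -> (a n < del%:E)%E)) => // Hn.
exfalso.
have Hg : forall N, exists n, (N <= n)%N /\ (del%:E <= a n)%E.
  move=> N; apply: contrapT => hc; apply: Hn; exists N => n Nn.
  rewrite ltNge; apply/negP => h; apply: hc; by exists n.
have [g Hg'] := choice Hg.
have HM : forall n, exists m, W n `<=` Ref m.
  move=> n; apply: bounded_Ref; apply: cube_bounded; exact: Wc.
have [M HM'] := choice HM.
have HN : forall m, exists N, forall n, (N <= n)%N -> Ref m `<=` W n.
  move=> m; exact: Wt _ (@Ref_bounded R d m).
have [Nr HNr'] := choice HN.
set C := Cseq W Ref g M Nr.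
have Cc : forall j, is_cube (C j).
  by move=> j; rewrite /C /Cseq; case: (odd j); [apply: Ref_cube | apply: Wc].
have Rinc : forall m m', (m <= m')%N -> @Ref R d m `<=` Ref m'.
  by move=> m m'; apply: Ref_incr.
have Hgg : forall N, (N <= g N)%N by move=> N; case: (Hg' N).
have Ci : increasing_sets C.
  move=> j; exact: (C_step _ _ _ _ _ Rinc HM' HNr' Hgg).
have Ct : tends_to_Rd C.
  move=> B bB; have [NB HNB] := Ref_tends B bB.
  exists NB.*2.+1 => j Hj.
  apply: subset_trans (HNB (mk g M Nr NB) (mk_ge _ _ _ _)) _.
  rewrite -(C_odd W Ref g M Nr NB).
exact: (C_mono _ _ _ _ _ Rinc HM' HNr' Hgg _ _ Hj).
have [ZC [mZC cZC]] := H2 C Cc Ci Ct.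
have mX : forall j, measurable_fun setT (X (C j)) by move=> j; exact: Hmeas.
have mXW : forall n, measurable_fun setT (X (W n)) by move=> n; exact: Hmeas.
have mXR : forall n, measurable_fun setT (X (Ref n)).
  move=> n; apply: Hmeas; exact: Ref_cube.
have e2 : 0 < eps / 2 by rewrite divr_gt0.
have e4 : 0 < eps / 2 / 2 by rewrite divr_gt0.
have d2 : 0 < del / 2 by rewrite divr_gt0.
have d4 : 0 < del / 2 / 2 by rewrite divr_gt0.
have le_dbl : forall k, (k <= k.*2)%N by move=> k; rewrite -addnn leq_addr.
have oC : ev0 (fun k => sP P (X (C k.*2.+1)) ZC (eps/2/2)).
  exact: (ev0_sub _ _ ((cipP P _ _).1 cZC _ e4) (fun k => leqW (le_dbl k))).
have oR : ev0 (fun k => sP P (X (Ref (mk g M Nr k))) Z0 (eps/2/2)).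
  exact: (ev0_sub _ _ ((cipP P _ _).1 cZ0 _ e4) (mk_ge g M Nr)).
have eC : ev0 (fun k => sP P (X (C k.*2)) ZC (eps/2)).
  exact: (ev0_sub _ _ ((cipP P _ _).1 cZC _ e2) le_dbl).
have [N1 h1] := oC _ d4.
have [N2 h2] := oR _ d4.
set k := maxn N1 N2.
have key : (sP P ZC Z0 (eps/2) < (del/2)%:E)%E.
  apply: le_lt_trans (@sP_tri R dO O P ZC (X (Ref (mk g M Nr k))) Z0 (eps/2) mZC (mXR _) mZ0) _.
  rewrite sP_sym [X in (_ < X%:E)%E](splitr (del/2)) EFinD.
  apply: lteD.
    have := h1 k (leq_maxl _ _); by rewrite /C C_odd.
  exact: h2 k (leq_maxr _ _).
have [N3 h3] := eC _ d2.
have [N HN0] := nk_g g M Nr N3.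
have [_ ge] := Hg' N.
have : (a (nk g M Nr N3) < del%:E)%E.
  apply: le_lt_trans (@sP_tri R dO O P (X (W (nk g M Nr N3))) ZC Z0 eps (mXW _) mZC mZ0) _.
  rewrite [X in (_ < X%:E)%E](splitr del) EFinD.
  apply: lteD => //.
  have := h3 N3 (leqnn _); by rewrite /C C_even.
by rewrite HN0 ltNge ge.
Qed.
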